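(* Let $M\subset\mathbb{R}^2$ be open with coordinates $(x,u)$, let $M^{(1)}$ be the first-order jet space with coordinates $(x,u,u_x)$, and consider the ODE $u_{xx}=\phi(x,u,u_x)$ with associated vector field $\mathbf{A}=\partial_x+u_x\partial_u+\phi\,\partial_{u_x}$. Let $(\partial_u,\lambda_1)$ and $(\partial_u,\lambda_2)$ be the canonical representatives of two non-equivalent generalized $\mathcal{C}^\infty$-symmetries of this ODE. Let $\mathbf{X}_i=\partial_u+\lambda_i\partial_{u_x}$, $\rho=\dfrac{\mathbf{X}_1(\lambda_2)-\mathbf{X}_2(\lambda_1)}{\lambda_1-\lambda_2}$, let $f_1,f_2\in C^\infty(M^{(1)})$ satisfy $\dfrac{\mathbf{X}_1(f_2)}{f_2}=\dfrac{\mathbf{X}_2(f_1)}{f_1}=\rho$, let $\mathbf{Y}_i=f_i\mathbf{X}_i$, $\rho_i=\lambda_i-\mathbf{A}(f_i)/f_i$, and let $g_1,g_2\in C^\infty(M^{(1)})$ satisfy $\mathbf{A}(g_1)=\rho_1g_1$, $\mathbf{Y}_2(g_1)=0$, $\mathbf{A}(g_2)=\rho_2g_2$, $\mathbf{Y}_1(g_2)=0$. Then two functionally independent first integrals $I_1$ and $I_2$ of $\mathbf{A}$, associated to $(\partial_u,\lambda_1)$ and $(\partial_u,\lambda_2)$ respectively, can be found by quadratures from the systems $$(I_1)_x=\frac{\lambda_1u_x-\phi}{f_2g_2(\lambda_2-\lambda_1)},\quad (I_1)_u=\frac{-\lambda_1}{f_2g_2(\lambda_2-\lambda_1)},\quad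 (I_1)_{u_x}=\frac{1}{f_2g_2(\lambda_2-\lambda_1)},$$ $$(I_2)_x=\frac{\lambda_2u_x-\phi}{f_1g_1(\lambda_1-\lambda_2)},\quad (I_2)_u=\frac{-\lambda_2}{f_1g_1(\lambda_1-\lambda_2)},\quad (I_2)_{u_x}=\frac{1}{f_1g_1(\lambda_1-\lambda_2)}.$$
   Context: All functions are smooth on $M^{(1)}$ and all statements are local, on an open set where $\lambda_1-\lambda_2$, $f_1,f_2,g_1,g_2$ do not vanish. For smooth $\xi,\eta,\lambda$ on $M^{(1)}$ and $\mathbf{v}=\xi\partial_x+\eta\partial_u$, the $\lambda$-prolongation is $\mathbf{v}^{[\lambda,(1)]}=\mathbf{v}+\big((\mathbf{A}+\lambda)(\eta)-(\mathbf{A}+\lambda)(\xi)u_x\big)\partial_{u_x}$. The pair $(\mathbf{v},\lambda)$ is a generalized $\mathcal{C}^\infty$-symmetry of the ODE if $[\mathbf{v}^{[\lambda,(1)]},\mathbf{A}]=\lambda\,\mathbf{v}^{[\lambda,(1)]}-(\mathbf{A}+\lambda)(\xi)\,\mathbf{A}$. A first integral of $\mathbf{A}$ associated to $(\mathbf{v},\lambda)$ is a function $I\in C^\infty(M^{(1)})$ with $\mathbf{A}(I)=\mathbf{v}^{[\lambda,(1)]}(I)=0$. Two generalized $\mathcal{C}^\infty$-symmetries $(\mathbf{v}_1,\lambda_1)$, $(\mathbf{v}_2,\lambda_2)$ are $\mathbf{A}$-equivalent if $\{\mathbf{A},\mathbf{v}_1^{[\lambda_1,(1)]},\mathbf{v}_2^{[\lambda_2,(1)]}\}$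 is linearly dependent over $C^\infty(M^{(1)})$. If $Q=\eta-\xi u_x$, the canonical representative of the class of $(\mathbf{v},\lambda)$ is $(\partial_u,\lambda+\mathbf{A}(Q)/Q)$. *)

(* Defs.v *)
From Stdlib Require Import Reals List.
From Coquelicot Require Import Coquelicot.
Open Scope R_scope.

(* Smooth functions on (an open subset of) the jet space M^(1), with
   coordinates (x, u, p), p standing for u_x.  Functions are total on R^3;
   only their values on the open set under consideration matter. *)
Definition fn := R -> R -> R -> R.
Definition pt := (R * R * R)%type.

Inductive dir := Dx | Du | Dp.

Definition pd (d : dir) (F : fn) : fn :=
  match d with
  | Dx => fun x u p => Derive (fun t => F t u p) x
  | Du => fun x u p => Derive (fun t => F x t p) u
  | Dp => fun x u p => Derive (fun t => F x u t) p
  end.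

Definition ex_pd (d : dir) (F : fn) (x u p : R) : Prop :=
  match d with
  | Dx => ex_derive (fun t => F t u p) x
  | Du => ex_derive (fun t => F x t p) u
  | Dp => ex_derive (fun t => F x u t) p
  end.

Fixpoint iter_pd (ds : list dir) (F : fn) : fn :=
  match ds with
  | nil => F
  | d :: ds' => pd d (iter_pd ds' F)
  end.

Definition uncurry3 (F : fn) : pt -> R := fun q => F (fst (fst q)) (snd (fst q)) (snd q).

Definition Cinf (U : pt -> Prop) (F : fn) : Prop :=
  forall (ds : list dir) (x u p : R), U (x, u, p) ->
    (forall d, ex_pd d (iter_pd ds F) x u p) /\
    continuous (uncurry3 (iter_pd ds F)) (x, u, p).

Definition subset3 (V U : pt -> Prop) : Prop := forall q, V q -> U q.

(* vector fields on M^(1): a ∂_x + b ∂_u + c ∂_{u_x} *)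
Record vf := VF { vx : fn; vu : fn; vp : fn }.

Definition vapp (V : vf) (F : fn) : fn := fun x u p =>
  vx V x u p * pd Dx F x u p + vu V x u p * pd Du F x u p
  + vp V x u p * pd Dp F x u p.

Definition bracket (V W : vf) : vf :=
  VF (fun x u p => vapp V (vx W) x u p - vapp W (vx V) x u p)
     (fun x u p => vapp V (vu W) x u p - vapp W (vu V) x u p)
     (fun x u p => vapp V (vp W) x u p - vapp W (vp V) x u p).

Definition cst (c : R) : fn := fun _ _ _ => c.

Definition Afield (phi : fn) : vf := VF (cst 1) (fun _ _ p => p) phi.

Definition Alam (phi lam h : fn) : fn := fun x u p =>
  vapp (Afield phi) h x u p + lam x u p * h x u p.

Definition prol (phi lam xi eta : fn) : vf :=
  VF xi eta (fun x u p => Alam phi lam eta x u p - Alam phi lam xi x u p * p).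

Definition gen_sym (U : pt -> Prop) (phi xi eta lam : fn) : Prop :=
  Cinf U xi /\ Cinf U eta /\ Cinf U lam /\
  let P := prol phi lam xi eta in
  let B := bracket P (Afield phi) in
  let c := Alam phi lam xi in
  forall x u p, U (x, u, p) ->
    vx B x u p = lam x u p * vx P x u p - c x u p * vx (Afield phi) x u p /\
    vu B x u p = lam x u p * vu P x u p - c x u p * vu (Afield phi) x u p /\
    vp B x u p = lam x u p * vp P x u p - c x u p * vp (Afield phi) x u p.

Definition A_equiv (U : pt -> Prop) (phi xi1 eta1 lam1 xi2 eta2 lam2 : fn) : Prop :=
  exists a b c : fn, Cinf U a /\ Cinf U b /\ Cinf U c /\
    (exists x u p, U (x, u, p) /\ (a x u p <> 0 \/ b x u p <> 0 \/ c x u p <> 0)) /\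
    let P1 := prol phi lam1 xi1 eta1 in
    let P2 := prol phi lam2 xi2 eta2 in
    let Af := Afield phi in
    forall x u p, U (x, u, p) ->
      a x u p * vx Af x u p + b x u p * vx P1 x u p + c x u p * vx P2 x u p = 0 /\
      a x u p * vu Af x u p + b x u p * vu P1 x u p + c x u p * vu P2 x u p = 0 /\
      a x u p * vp Af x u p + b x u p * vp P1 x u p + c x u p * vp P2 x u p = 0.

Definition first_integral (V : pt -> Prop) (phi xi eta lam I : fn) : Prop :=
  Cinf V I /\
  forall x u p, V (x, u, p) ->
    vapp (Afield phi) I x u p = 0 /\ vapp (prol phi lam xi eta) I x u p = 0.

Definition func_indep (V : pt -> Prop) (I1 I2 : fn) : Prop :=
  forall x u p, V (x, u, p) -> forall a b : R,
    a * pd Dx I1 x u p + b * pd Dx I2 x u p = 0 ->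
    a * pd Du I1 x u p + b * pd Du I2 x u p = 0 ->
    a * pd Dp I1 x u p + b * pd Dp I2 x u p = 0 ->
    a = 0 /\ b = 0.

Definition grad_system (V : pt -> Prop) (I gx gu gp : fn) : Prop :=
  forall x u p, V (x, u, p) ->
    is_derive (fun t => I t u p) x (gx x u p) /\
    is_derive (fun t => I x t p) u (gu x u p) /\
    is_derive (fun t => I x u t) p (gp x u p).

(* Main.v *)
Require Import Defs.
From Stdlib Require Import Reals List Lra FunctionalExtensionality.
From Coquelicot Require Import Coquelicot.
Open Scope R_scope.

Lemma open_box (U : pt -> Prop) x u p : open U -> U (x,u,p) ->
  exists eps : posreal, forall x' u' p', Rabs (x'-x) < eps -> Rabs (u'-u) < eps ->
    Rabs (p'-p) < eps -> U (x',u',p').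
Proof.
  intros HU Hq. destruct (HU _ Hq) as [eps He]. exists eps.
  intros x' u' p' h1 h2 h3. apply He. split; [split|]; assumption.
Qed.

Lemma open_loc (U : pt -> Prop) q : open U -> U q -> locally q U.
Proof. intros HU Hq. exact (HU q Hq). Qed.

Lemma pd_loc (U : pt -> Prop) (F G : fn) d x u p : open U ->
  (forall x u p, U (x,u,p) -> F x u p = G x u p) -> U (x,u,p) ->
  pd d F x u p = pd d G x u p.
Proof.
  intros HU HFG Hq. destruct (open_box U x u p HU Hq) as [e He].
  destruct d; simpl; apply Derive_ext_loc; exists e; intros t Ht; apply HFG;
  apply He; try exact Ht; rewrite Rminus_diag, Rabs_R0; apply cond_pos.
Qed.

Lemma ex_pd_loc (U : pt -> Prop) (F G : fn) d x u p : open U ->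
  (forall x u p, U (x,u,p) -> F x u p = G x u p) -> U (x,u,p) ->
  ex_pd d F x u p -> ex_pd d G x u p.
Proof.
  intros HU HFG Hq. destruct (open_box U x u p HU Hq) as [e He].
  destruct d; simpl; apply ex_derive_ext_loc; exists e; intros t Ht; apply HFG;
  apply He; try exact Ht; rewrite Rminus_diag, Rabs_R0; apply cond_pos.
Qed.

Definition base (U : pt -> Prop) (F : fn) : Prop :=
  forall x u p, U (x,u,p) -> (forall d, ex_pd d F x u p) /\
    continuous (uncurry3 F) (x,u,p).

Fixpoint CN (n : nat) (U : pt -> Prop) (F : fn) : Prop :=
  base U F /\ match n with O => True | S m => forall d, CN m U (pd d F) end.

Lemma CN_base n U F : CN n U F -> base U F.
Proof. destruct n; simpl; tauto. Qed.

Lemma CN_mono n U F : CN (S n) U F -> CN n U F.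
Proof.
  revert F; induction n; intros F [Hb Hd]; simpl; split; auto.
Qed.

Lemma CN_pd n U F d : CN (S n) U F -> CN n U (pd d F).
Proof. intros [_ H]. apply H. Qed.

Lemma iter_pd_app ds d F : iter_pd (ds ++ d :: nil) F = iter_pd ds (pd d F).
Proof. induction ds; simpl; [reflexivity | rewrite IHds; reflexivity]. Qed.

Lemma CN_all_iter U ds : forall (G : fn), (forall n, CN n U G) ->
  forall x u p, U (x,u,p) -> (forall d, ex_pd d (iter_pd ds G) x u p) /\
    continuous (uncurry3 (iter_pd ds G)) (x,u,p).
Proof.
  induction ds as [|e ds0 IH0] using rev_ind; intros G HG.
  - intros x u p Hq. exact (CN_base 0 U G (HG 0%nat) x u p Hq).
  - rewrite iter_pd_app. apply IH0. intros n. apply CN_pd, HG.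
Qed.

Lemma Cinf_CN U F : Cinf U F <-> forall n, CN n U F.
Proof.
  split.
  - intros H n. revert F H. induction n; intros F H.
    + split; [|exact I]. intros x u p Hq. exact (H nil x u p Hq).
    + split. { intros x u p Hq. exact (H nil x u p Hq). }
      intros d. apply IHn. intros ds x u p Hq.
      rewrite <- iter_pd_app. apply H. exact Hq.
  - intros H ds. apply CN_all_iter. exact H.
Qed.

Lemma Cinf_mono (U V : pt -> Prop) F : subset3 V U -> Cinf U F -> Cinf V F.
Proof. intros HVU H ds x u p Hq. apply H, HVU, Hq. Qed.

Lemma CN_ext n (U : pt -> Prop) (F G : fn) : open U ->
  (forall x u p, U (x,u,p) -> F x u p = G x u p) -> CN n U F -> CN n U G.
Proof.
  revert F G. induction n; intros F G HU HFG [Hb Hd]; split.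
  2: exact I.
  3: { intros d. apply (IHn (pd d F)); auto. intros x u p Hq. apply pd_loc with U; auto. }
  all: intros x u p Hq; destruct (Hb x u p Hq) as [H1 H2]; split;
    [ intros d; apply ex_pd_loc with U F; auto
    | apply continuous_ext_loc with (uncurry3 F); [|exact H2];
      apply (filter_imp U); [intros [[a b] c] Hc; apply HFG; exact Hc | apply HU; exact Hq] ].
Qed.


Definition fplus (F G : fn) : fn := fun x u p => F x u p + G x u p.
Definition fmult (F G : fn) : fn := fun x u p => F x u p * G x u p.
Definition finv (F : fn) : fn := fun x u p => / F x u p.

Lemma cont3_plus F G q : continuous (uncurry3 F) q -> continuous (uncurry3 G) q ->
  continuous (uncurry3 (fplus F G)) q.
Proof.
  intros H1 H2. eapply continuous_ext; [|apply (continuous_plus _ _ _ H1 H2)].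
  intros; reflexivity.
Qed.

Lemma cont3_mult F G q : continuous (uncurry3 F) q -> continuous (uncurry3 G) q ->
  continuous (uncurry3 (fmult F G)) q.
Proof.
  intros H1 H2. eapply continuous_ext; [|apply (continuous_mult _ _ _ H1 H2)].
  intros; reflexivity.
Qed.

Lemma cont3_inv F q : continuous (uncurry3 F) q -> uncurry3 F q <> 0 ->
  continuous (uncurry3 (finv F)) q.
Proof.
  intros H1 H2. eapply continuous_ext; [|apply (continuous_comp _ _ _ H1 (continuous_Rinv _ H2))].
  intros; reflexivity.
Qed.

Lemma cont3_cst c q : continuous (uncurry3 (cst c)) q.
Proof. apply continuous_const. Qed.

Lemma cont3_pp q : continuous (uncurry3 (fun _ _ p => p)) q.
Proof. destruct q as [[a b] c]. apply continuous_snd. Qed.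
Lemma cont3_pu q : continuous (uncurry3 (fun _ u _ => u)) q.
Proof. destruct q as [[a b] c]. unfold uncurry3.
  apply (continuous_comp fst snd (a,b,c)). apply continuous_fst. apply continuous_snd. Qed.
Lemma cont3_px q : continuous (uncurry3 (fun x _ _ => x)) q.
Proof. destruct q as [[a b] c]. unfold uncurry3.
  apply (continuous_comp fst fst (a,b,c)). apply continuous_fst. apply continuous_fst. Qed.

Lemma ex_pd_plus d F G x u p : ex_pd d F x u p -> ex_pd d G x u p -> ex_pd d (fplus F G) x u p.
Proof. destruct d; simpl; unfold fplus; intros H1 H2; exact (ex_derive_plus _ _ _ H1 H2). Qed.
Lemma ex_pd_mult d F G x u p : ex_pd d F x u p -> ex_pd d G x u p -> ex_pd d (fmult F G) x u p.
Proof. destruct d; simpl; unfold fmult; apply ex_derive_mult. Qed.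
Lemma ex_pd_inv d F x u p : ex_pd d F x u p -> F x u p <> 0 -> ex_pd d (finv F) x u p.
Proof. destruct d; simpl; unfold finv; intros H1 H2; exact (ex_derive_inv _ _ H1 H2). Qed.

Lemma pd_plus d F G x u p : ex_pd d F x u p -> ex_pd d G x u p ->
  pd d (fplus F G) x u p = pd d F x u p + pd d G x u p.
Proof. destruct d; simpl; unfold fplus; intros H1 H2; exact (Derive_plus _ _ _ H1 H2). Qed.
Lemma pd_mult d F G x u p : ex_pd d F x u p -> ex_pd d G x u p ->
  pd d (fmult F G) x u p = pd d F x u p * G x u p + F x u p * pd d G x u p.
Proof. destruct d; simpl; unfold fmult; intros H1 H2; exact (Derive_mult _ _ _ H1 H2). Qed.
Lemma pd_inv d F x u p : ex_pd d F x u p -> F x u p <> 0 ->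
  pd d (finv F) x u p = - pd d F x u p / (F x u p ^ 2).
Proof. destruct d; simpl; unfold finv; intros H1 H2; exact (Derive_inv _ _ H1 H2). Qed.

Lemma pd_cst d c : pd d (cst c) = cst 0.
Proof.
  apply functional_extensionality; intros x; apply functional_extensionality; intros u;
  apply functional_extensionality; intros p. destruct d; simpl; unfold cst; apply Derive_const.
Qed.
Lemma ex_pd_cst d c x u p : ex_pd d (cst c) x u p.
Proof. destruct d; simpl; unfold cst; apply (ex_derive_const (K:=R_AbsRing) (V:=R_NormedModule)). Qed.

Definition projx : fn := fun x _ _ => x.
Definition proju : fn := fun _ u _ => u.
Definition projp : fn := fun _ _ p => p.

Lemma pd_projx d : pd d projx = cst (match d with Defs.Dx => 1 | _ => 0 end).
Proof.
  apply functional_extensionality; intros x; apply functional_extensionality; intros u;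
  apply functional_extensionality; intros p. destruct d; simpl; unfold projx, cst.
  apply Derive_id. apply Derive_const. apply Derive_const.
Qed.
Lemma pd_proju d : pd d proju = cst (match d with Defs.Du => 1 | _ => 0 end).
Proof.
  apply functional_extensionality; intros x; apply functional_extensionality; intros u;
  apply functional_extensionality; intros p. destruct d; simpl; unfold proju, cst.
  apply Derive_const. apply Derive_id. apply Derive_const.
Qed.
Lemma pd_projp d : pd d projp = cst (match d with Defs.Dp => 1 | _ => 0 end).
Proof.
  apply functional_extensionality; intros x; apply functional_extensionality; intros u;
  apply functional_extensionality; intros p. destruct d; simpl; unfold projp, cst.
  apply Derive_const. apply Derive_const. apply Derive_id.
Qed.
Lemma ex_pd_projx d x u p : ex_pd d projx x u p.
Proof. destruct d; simpl; unfold projx; auto_derive; auto. Qed.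
Lemma ex_pd_proju d x u p : ex_pd d proju x u p.
Proof. destruct d; simpl; unfold proju; auto_derive; auto. Qed.
Lemma ex_pd_projp d x u p : ex_pd d projp x u p.
Proof. destruct d; simpl; unfold projp; auto_derive; auto. Qed.

Lemma CN_cst n U c : CN n U (cst c).
Proof.
  revert c; induction n; intros c; split; try exact I;
    try (intros x u p _; split; [intros; apply ex_pd_cst | apply cont3_cst]).
  intros d. rewrite pd_cst. apply IHn.
Qed.

Lemma CN_projx n U : CN n U projx.
Proof.
  destruct n; split; try exact I;
    try (intros x u p _; split; [intros; apply ex_pd_projx | apply cont3_px]).
  intros d. rewrite pd_projx. apply CN_cst.
Qed.
Lemma CN_proju n U : CN n U proju.
Proof.
  destruct n; split; try exact I;
    try (intros x u p _; split; [intros; apply ex_pd_proju | apply cont3_pu]).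
  intros d. rewrite pd_proju. apply CN_cst.
Qed.
Lemma CN_projp n U : CN n U projp.
Proof.
  destruct n; split; try exact I;
    try (intros x u p _; split; [intros; apply ex_pd_projp | apply cont3_pp]).
  intros d. rewrite pd_projp. apply CN_cst.
Qed.

Lemma CN_plus n U F G : open U -> CN n U F -> CN n U G -> CN n U (fplus F G).
Proof.
  revert F G; induction n; intros F G HU HF HG; split; try exact I;
  try (intros x u p Hq; destruct (CN_base _ _ _ HF x u p Hq) as [F1 F2];
       destruct (CN_base _ _ _ HG x u p Hq) as [G1 G2]; split;
       [intros d; apply ex_pd_plus; auto | apply cont3_plus; auto]).
  intros d. apply CN_ext with (fplus (pd d F) (pd d G)); auto.
  - intros x u p Hq. symmetry. apply pd_plus.
    apply (CN_base _ _ _ HF x u p Hq). apply (CN_base _ _ _ HG x u p Hq).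
  - apply IHn; auto; apply CN_pd; auto.
Qed.

Lemma CN_mult n U F G : open U -> CN n U F -> CN n U G -> CN n U (fmult F G).
Proof.
  revert F G; induction n; intros F G HU HF HG; split; try exact I;
  try (intros x u p Hq; destruct (CN_base _ _ _ HF x u p Hq) as [F1 F2];
       destruct (CN_base _ _ _ HG x u p Hq) as [G1 G2]; split;
       [intros d; apply ex_pd_mult; auto | apply cont3_mult; auto]).
  intros d. apply CN_ext with (fplus (fmult (pd d F) G) (fmult F (pd d G))); auto.
  - intros x u p Hq. symmetry. apply pd_mult.
    apply (CN_base _ _ _ HF x u p Hq). apply (CN_base _ _ _ HG x u p Hq).
  - apply CN_plus; auto; apply IHn; auto; try apply CN_pd; auto; apply CN_mono; auto.
Qed.

Lemma CN_inv n U F : open U -> (forall x u p, U (x,u,p) -> F x u p <> 0) ->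
  CN n U F -> CN n U (finv F).
Proof.
  revert F; induction n; intros F HU Hnz HF; split; try exact I;
  try (intros x u p Hq; destruct (CN_base _ _ _ HF x u p Hq) as [F1 F2]; split;
       [intros d; apply ex_pd_inv; auto | apply cont3_inv; auto; apply Hnz; auto]).
  intros d. apply CN_ext with (fmult (fmult (fmult (cst (-1)) (pd d F)) (finv F)) (finv F)); auto.
  - intros x u p Hq. rewrite pd_inv; [|apply (CN_base _ _ _ HF x u p Hq)|apply Hnz; auto].
    unfold fmult, finv, cst. specialize (Hnz x u p Hq). field. auto.
  - apply CN_mult; auto. apply CN_mult; auto. apply CN_mult; auto. apply CN_cst.
    apply CN_pd; auto. apply IHn; auto. apply CN_mono; auto.
    apply IHn; auto. apply CN_mono; auto.
Qed.


Lemma c3_slice_x F x u p : continuous (uncurry3 F) (x,u,p) -> continuous (fun t => F t u p) x.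
Proof.
  intros H. apply (continuous_comp (fun t : R => ((t,u),p) : pt) (uncurry3 F) x); [|exact H].
  intros P [eps HP]. exists eps. intros y Hy. apply HP. split; [split|]; simpl.
  exact Hy. apply ball_center. apply ball_center.
Qed.
Lemma c3_slice_u F x u p : continuous (uncurry3 F) (x,u,p) -> continuous (fun t => F x t p) u.
Proof.
  intros H. apply (continuous_comp (fun t : R => ((x,t),p) : pt) (uncurry3 F) u); [|exact H].
  intros P [eps HP]. exists eps. intros y Hy. apply HP. split; [split|]; simpl.
  apply ball_center. exact Hy. apply ball_center.
Qed.
Lemma c3_slice_p F x u p : continuous (uncurry3 F) (x,u,p) -> continuous (fun t => F x u t) p.
Proof.
  intros H. apply (continuous_comp (fun t : R => ((x,u),t) : pt) (uncurry3 F) p); [|exact H].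
  intros P [eps HP]. exists eps. intros y Hy. apply HP. split; [split|]; simpl.
  apply ball_center. apply ball_center. exact Hy.
Qed.

Lemma c3_2d_xu F x u p : continuous (uncurry3 F) (x,u,p) -> continuity_2d_pt (fun s t => F s t p) x u.
Proof.
  intros H. apply continuity_2d_pt_filterlim.
  apply (continuous_comp (fun z : R * R => ((fst z, snd z),p) : pt) (uncurry3 F) (x,u)); [|exact H].
  intros P [eps HP]. exists eps. intros [y1 y2] [H1 H2]. apply HP. split; [split|]; simpl.
  exact H1. exact H2. apply ball_center.
Qed.
Lemma c3_2d_xp F x u p : continuous (uncurry3 F) (x,u,p) -> continuity_2d_pt (fun s t => F s u t) x p.
Proof.
  intros H. apply continuity_2d_pt_filterlim.
  apply (continuous_comp (fun z : R * R => ((fst z, u),snd z) : pt) (uncurry3 F) (x,p)); [|exact H].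
  intros P [eps HP]. exists eps. intros [y1 y2] [H1 H2]. apply HP. split; [split|]; simpl.
  exact H1. apply ball_center. exact H2.
Qed.
Lemma c3_2d_up F x u p : continuous (uncurry3 F) (x,u,p) -> continuity_2d_pt (fun s t => F x s t) u p.
Proof.
  intros H. apply continuity_2d_pt_filterlim.
  apply (continuous_comp (fun z : R * R => ((x, fst z),snd z) : pt) (uncurry3 F) (u,p)); [|exact H].
  intros P [eps HP]. exists eps. intros [y1 y2] [H1 H2]. apply HP. split; [split|]; simpl.
  apply ball_center. exact H1. exact H2.
Qed.

Lemma c2d_slice (f : R -> R -> R) x y : continuity_2d_pt f x y -> continuous (fun t => f x t) y.
Proof.
  intros H. apply filterlim_locally. intros eps. destruct (H eps) as [d Hd].
  exists d. intros t Ht. apply Hd. rewrite Rminus_diag, Rabs_R0. apply cond_pos. exact Ht.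
Qed.

Lemma seg_in c r a b z : Rabs (a - c) < r -> Rabs (b - c) < r ->
  Rmin a b <= z <= Rmax a b -> Rabs (z - c) < r.
Proof.
  intros Ha Hb Hz. unfold Rmin, Rmax in Hz. destruct (Rle_dec a b);
  apply Rabs_def2 in Ha; apply Rabs_def2 in Hb; apply Rabs_def1; lra.
Qed.

Lemma near_in c r t : Rabs (t - c) < r ->
  locally t (fun y => Rabs (y - c) < r).
Proof.
  intros Ht. assert (Hp : 0 < r - Rabs (t - c)) by lra.
  exists (mkposreal _ Hp). intros y Hy. change (Rabs (y - t) < r - Rabs (t - c)) in Hy.
  apply Rabs_def2 in Hy. apply Rabs_def1; split_Rabs; lra.
Qed.

Lemma ftc_upper (g : R -> R) c r a t : Rabs (a - c) < r -> Rabs (t - c) < r ->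
  (forall s, Rabs (s - c) < r -> continuous g s) ->
  is_derive (fun t => RInt g a t) t (g t).
Proof.
  intros Ha Ht Hg. apply is_derive_RInt with (f := g) (a := a).
  - apply (filter_imp (fun y => Rabs (y - c) < r)); [|apply near_in; auto].
    intros y Hy. apply (@RInt_correct R_CompleteNormedModule). apply ex_RInt_continuous.
    intros z Hz. apply Hg. apply (seg_in c r a y); auto.
  - apply Hg; auto.
Qed.

Lemma int_of_deriv (h dh : R -> R) c r a b : Rabs (a - c) < r -> Rabs (b - c) < r ->
  (forall s, Rabs (s - c) < r -> is_derive h s (dh s) /\ continuous dh s) ->
  RInt dh a b = h b - h a.
Proof.
  intros Ha Hb H. apply is_RInt_unique. apply (is_RInt_derive h dh).
  - intros z Hz. apply H. apply (seg_in c r a b); auto.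
  - intros z Hz. apply H. apply (seg_in c r a b); auto.
Qed.

Lemma deriv_param (f : R -> R -> R) z cz rz cs rs a b :
  Rabs (z - cz) < rz -> Rabs (a - cs) < rs -> Rabs (b - cs) < rs ->
  (forall z s, Rabs (z - cz) < rz -> Rabs (s - cs) < rs ->
     ex_derive (fun z' => f z' s) z /\
     continuity_2d_pt (fun z s => Derive (fun z' => f z' s) z) z s /\
     continuity_2d_pt f z s) ->
  is_derive (fun z => RInt (fun s => f z s) a b) z
    (RInt (fun s => Derive (fun z' => f z' s) z) a b).
Proof.
  intros Hz Ha Hb H. apply is_derive_RInt_param.
  - apply (filter_imp (fun y => Rabs (y - cz) < rz)); [|apply near_in; auto].
    intros y Hy t Ht. apply H; auto. apply (seg_in cs rs a b); auto.
  - intros t Ht. apply H; auto. apply (seg_in cs rs a b); auto.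
  - apply (filter_imp (fun y => Rabs (y - cz) < rz)); [|apply near_in; auto].
    intros y Hy. apply (@ex_RInt_continuous R_CompleteNormedModule). intros t Ht. apply c2d_slice.
    apply H; auto. apply (seg_in cs rs a b); auto.
Qed.

Lemma is_derive_sum3 (f g h : R -> R) x l1 l2 l3 l :
  is_derive f x l1 -> is_derive g x l2 -> is_derive h x l3 -> l = l1 + l2 + l3 ->
  is_derive (fun t => f t + g t + h t) x l.
Proof.
  intros H1 H2 H3 ->. apply (is_derive_plus (fun t => f t + g t) h).
  apply (is_derive_plus f g); auto. auto.
Qed.

Definition box (x0 u0 p0 r : R) : pt -> Prop := fun q =>
  Rabs (fst (fst q) - x0) < r /\ Rabs (snd (fst q) - u0) < r /\ Rabs (snd q - p0) < r.

Lemma box_open x0 u0 p0 r : open (box x0 u0 p0 r).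
Proof.
  intros [[x u] p] [H1 [H2 H3]]. simpl in *.
  destruct (near_in _ _ _ H1) as [e1 E1]. destruct (near_in _ _ _ H2) as [e2 E2].
  destruct (near_in _ _ _ H3) as [e3 E3].
  assert (Hp : 0 < Rmin e1 (Rmin e2 e3)).
  { apply Rmin_pos. apply cond_pos. apply Rmin_pos; apply cond_pos. }
  exists (mkposreal _ Hp). intros [[x' u'] p'] [[B1 B2] B3]. simpl in *.
  split; [|split]; simpl.
  - apply E1. eapply Rlt_le_trans; [exact B1|]. apply Rmin_l.
  - apply E2. eapply Rlt_le_trans; [exact B2|]. eapply Rle_trans; [apply Rmin_r|]. apply Rmin_l.
  - apply E3. eapply Rlt_le_trans; [exact B3|]. eapply Rle_trans; [apply Rmin_r|]. apply Rmin_r.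
Qed.


Lemma CN1_info U F x u p : CN 1 U F -> U (x,u,p) ->
  (forall d, ex_pd d F x u p) /\ continuous (uncurry3 F) (x,u,p) /\
  (forall d, continuous (uncurry3 (pd d F)) (x,u,p)).
Proof.
  intros [Hb Hd] Hq. destruct (Hb x u p Hq) as [H1 H2]. split; [|split]; auto.
  intros d. destruct (Hd d) as [Hb' _]. apply (Hb' x u p Hq).
Qed.

Lemma RInt_ext_seg (f g : R -> R) c r a b : Rabs (a - c) < r -> Rabs (b - c) < r ->
  (forall s, Rabs (s - c) < r -> f s = g s) -> RInt f a b = RInt g a b.
Proof.
  intros Ha Hb H. apply RInt_ext. intros s Hs. apply H.
  apply (seg_in c r a b); auto. lra.
Qed.

Definition pI (x0 u0 p0 : R) (a b c : fn) : fn := fun x u p =>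
  RInt (fun s => a s u0 p0) x0 x + RInt (fun s => b x s p0) u0 u + RInt (fun s => c x u s) p0 p.

Lemma poincare x0 u0 p0 r (a b c : fn) :
  CN 1 (box x0 u0 p0 r) a -> CN 1 (box x0 u0 p0 r) b -> CN 1 (box x0 u0 p0 r) c ->
  (forall x u p, box x0 u0 p0 r (x,u,p) ->
     pd Defs.Du a x u p = pd Defs.Dx b x u p /\ pd Defs.Dp a x u p = pd Defs.Dx c x u p /\
     pd Defs.Dp b x u p = pd Defs.Du c x u p) ->
  grad_system (box x0 u0 p0 r) (pI x0 u0 p0 a b c) a b c.
Proof.
  intros Ha Hb Hc Hcl.
  assert (IB : forall x u p, Rabs (x - x0) < r -> Rabs (u - u0) < r -> Rabs (p - p0) < r ->
     box x0 u0 p0 r (x,u,p)) by (intros; split; [|split]; assumption).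
  intros x u p [Hx [Hu Hp]]. simpl in Hx, Hu, Hp.
  assert (r0 : 0 < r) by (eapply Rle_lt_trans; [apply Rabs_pos|exact Hx]).
  assert (Z : forall c0, Rabs (c0 - c0) < r) by (intros; rewrite Rminus_diag, Rabs_R0; exact r0).
  unfold pI. split; [|split].
  -
    apply (is_derive_sum3 (fun t => RInt (fun s => a s u0 p0) x0 t)
             (fun t => RInt (fun s => b t s p0) u0 u) (fun t => RInt (fun s => c t u s) p0 p) x
             (a x u0 p0) (RInt (fun s => Derive (fun z => b z s p0) x) u0 u)
             (RInt (fun s => Derive (fun z => c z u s) x) p0 p)).
    + apply (ftc_upper (fun s => a s u0 p0) x0 r); auto. intros s Hs.
      apply c3_slice_x. apply (CN1_info _ _ s u0 p0 Ha (IB _ _ _ Hs (Z _) (Z _))).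
    + apply (deriv_param (fun z s => b z s p0) x x0 r u0 r); auto.
      intros z s Hz Hs. destruct (CN1_info _ _ z s p0 Hb (IB _ _ _ Hz Hs (Z _))) as [E1 [E2 E3]].
      split; [apply (E1 Defs.Dx)|split].
      * apply (c3_2d_xu (pd Defs.Dx b)). apply E3.
      * apply (c3_2d_xu b). apply E2.
    + apply (deriv_param (fun z s => c z u s) x x0 r p0 r); auto.
      intros z s Hz Hs. destruct (CN1_info _ _ z u s Hc (IB _ _ _ Hz Hu Hs)) as [E1 [E2 E3]].
      split; [apply (E1 Defs.Dx)|split].
      * apply (c3_2d_xp (pd Defs.Dx c)). apply E3.
      * apply (c3_2d_xp c). apply E2.
    + rewrite (RInt_ext_seg _ (fun s => pd Defs.Du a x s p0) u0 r u0 u); auto.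
      2:{ intros s Hs. symmetry. apply (Hcl x s p0). apply IB; auto. }
      rewrite (RInt_ext_seg _ (fun s => pd Defs.Dp a x u s) p0 r p0 p); auto.
      2:{ intros s Hs. symmetry. apply (Hcl x u s). apply IB; auto. }
      rewrite (int_of_deriv (fun s => a x s p0) _ u0 r u0 u); auto.
      2:{ intros s Hs. destruct (CN1_info _ _ x s p0 Ha (IB _ _ _ Hx Hs (Z _))) as [E1 [E2 E3]].
          split. apply (Derive_correct (fun t => a x t p0)). apply (E1 Defs.Du).
          apply (c3_slice_u (pd Defs.Du a)). apply E3. }
      rewrite (int_of_deriv (fun s => a x u s) _ p0 r p0 p); auto.
      2:{ intros s Hs. destruct (CN1_info _ _ x u s Ha (IB _ _ _ Hx Hu Hs)) as [E1 [E2 E3]].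
          split. apply (Derive_correct (fun t => a x u t)). apply (E1 Defs.Dp).
          apply (c3_slice_p (pd Defs.Dp a)). apply E3. }
      ring.
  -
    apply (is_derive_sum3 (fun _ => RInt (fun s => a s u0 p0) x0 x)
             (fun t => RInt (fun s => b x s p0) u0 t) (fun t => RInt (fun s => c x t s) p0 p) u
             0 (b x u p0) (RInt (fun s => Derive (fun z => c x z s) u) p0 p)).
    + exact (@is_derive_const R_AbsRing R_NormedModule _ _).
    + apply (ftc_upper (fun s => b x s p0) u0 r); auto. intros s Hs.
      apply c3_slice_u. apply (CN1_info _ _ x s p0 Hb (IB _ _ _ Hx Hs (Z _))).
    + apply (deriv_param (fun z s => c x z s) u u0 r p0 r); auto.
      intros z s Hz Hs. destruct (CN1_info _ _ x z s Hc (IB _ _ _ Hx Hz Hs)) as [E1 [E2 E3]].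
      split; [apply (E1 Defs.Du)|split].
      * apply (c3_2d_up (pd Defs.Du c)). apply E3.
      * apply (c3_2d_up c). apply E2.
    + rewrite (RInt_ext_seg _ (fun s => pd Defs.Dp b x u s) p0 r p0 p); auto.
      2:{ intros s Hs. symmetry. apply (Hcl x u s). apply IB; auto. }
      rewrite (int_of_deriv (fun s => b x u s) _ p0 r p0 p); auto.
      2:{ intros s Hs. destruct (CN1_info _ _ x u s Hb (IB _ _ _ Hx Hu Hs)) as [E1 [E2 E3]].
          split. apply (Derive_correct (fun t => b x u t)). apply (E1 Defs.Dp).
          apply (c3_slice_p (pd Defs.Dp b)). apply E3. }
      ring.
  -
    apply (is_derive_sum3 (fun _ => RInt (fun s => a s u0 p0) x0 x)
             (fun _ => RInt (fun s => b x s p0) u0 u) (fun t => RInt (fun s => c x u s) p0 t) p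
             0 0 (c x u p)).
    + exact (@is_derive_const R_AbsRing R_NormedModule _ _).
    + exact (@is_derive_const R_AbsRing R_NormedModule _ _).
    + apply (ftc_upper (fun s => c x u s) p0 r); auto. intros s Hs.
      apply c3_slice_p. apply (CN1_info _ _ x u s Hc (IB _ _ _ Hx Hu Hs)).
    + ring.
Qed.


Lemma mvt_bound (h dh : R -> R) c rho M a b : Rabs (a - c) < rho -> Rabs (b - c) < rho ->
  (forall s, Rabs (s - c) < rho -> is_derive h s (dh s) /\ Rabs (dh s) <= M) ->
  Rabs (h b - h a) <= M * Rabs (b - a).
Proof.
  intros Ha Hb H.
  destruct (MVT_gen h a b dh) as [z [Hz E]].
  - intros s Hs. apply H. apply (seg_in c rho a b); auto. lra.
  - intros s Hs. apply continuity_pt_filterlim. apply (ex_derive_continuous (K:=R_AbsRing) (V:=R_NormedModule)).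
    exists (dh s). apply H. apply (seg_in c rho a b); auto.
  - rewrite E, Rabs_mult. apply Rmult_le_compat_r. apply Rabs_pos.
    apply H. apply (seg_in c rho a b); auto.
Qed.

Lemma cont_bound (g : fn) q : continuous (uncurry3 g) q ->
  exists d : posreal, forall x' u' p', Rabs (x' - fst (fst q)) < d -> Rabs (u' - snd (fst q)) < d ->
    Rabs (p' - snd q) < d -> Rabs (g x' u' p') <= Rabs (uncurry3 g q) + 1.
Proof.
  intros H. destruct q as [[x u] p].
  assert (H1 := proj1 (filterlim_locally _ _) H (mkposreal 1 Rlt_0_1)).
  destruct H1 as [d Hd]. exists d. intros x' u' p' h1 h2 h3.
  assert (K : ball (uncurry3 g (x,u,p)) 1 (uncurry3 g (x',u',p'))) by (apply Hd; split; [split|]; assumption).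
  change (Rabs (g x' u' p' - g x u p) < 1) in K. simpl.
  replace (g x' u' p') with (g x u p + (g x' u' p' - g x u p)) by ring.
  eapply Rle_trans; [apply Rabs_triang|]. unfold uncurry3; simpl. lra.
Qed.

Lemma C1_cont (V : pt -> Prop) (I ga gb gc : fn) x u p : open V ->
  grad_system V I ga gb gc ->
  (forall q, V q -> continuous (uncurry3 ga) q /\ continuous (uncurry3 gb) q /\ continuous (uncurry3 gc) q) ->
  V (x,u,p) -> continuous (uncurry3 I) (x,u,p).
Proof.
  intros HV Hg Hc Hq.
  destruct (open_box V x u p HV Hq) as [e He].
  destruct (Hc _ Hq) as [Ca [Cb Cc]].
  destruct (cont_bound _ _ Ca) as [da Da]. destruct (cont_bound _ _ Cb) as [db Db].
  destruct (cont_bound _ _ Cc) as [dc Dc]. simpl in Da, Db, Dc.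
  set (M := Rabs (ga x u p) + 1 + (Rabs (gb x u p) + 1) + (Rabs (gc x u p) + 1)).
  assert (HM : 0 < M) by (unfold M; generalize (Rabs_pos (ga x u p)) (Rabs_pos (gb x u p)) (Rabs_pos (gc x u p)); lra).
  set (rho := Rmin e (Rmin da (Rmin db dc))).
  assert (Hrho : 0 < rho).
  { unfold rho. repeat apply Rmin_pos; apply cond_pos. }
  assert (R1 : rho <= e) by apply Rmin_l.
  assert (R2 : rho <= da) by (eapply Rle_trans; [apply Rmin_r|apply Rmin_l]).
  assert (R3 : rho <= db) by (eapply Rle_trans; [apply Rmin_r|]; eapply Rle_trans; [apply Rmin_r|apply Rmin_l]).
  assert (R4 : rho <= dc) by (eapply Rle_trans; [apply Rmin_r|]; eapply Rle_trans; [apply Rmin_r|apply Rmin_r]).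
  assert (Inside : forall x' u' p', Rabs (x'-x) < rho -> Rabs (u'-u) < rho -> Rabs (p'-p) < rho ->
     V (x',u',p') /\ Rabs (ga x' u' p') <= M /\ Rabs (gb x' u' p') <= M /\ Rabs (gc x' u' p') <= M).
  { intros x' u' p' h1 h2 h3. split; [apply He; lra|].
    assert (A1 := Da x' u' p' ltac:(lra) ltac:(lra) ltac:(lra)).
    assert (A2 := Db x' u' p' ltac:(lra) ltac:(lra) ltac:(lra)).
    assert (A3 := Dc x' u' p' ltac:(lra) ltac:(lra) ltac:(lra)).
    generalize (Rabs_pos (ga x u p)) (Rabs_pos (gb x u p)) (Rabs_pos (gc x u p)).
    unfold uncurry3 in A1, A2, A3; simpl in A1, A2, A3. unfold M; split; [|split]; lra. }
  apply filterlim_locally. intros eps.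
  assert (Heta : 0 < Rmin rho (eps / (3 * M))).
  { apply Rmin_pos; auto. apply Rdiv_lt_0_compat. apply cond_pos. lra. }
  exists (mkposreal _ Heta). intros [[x' u'] p'] [[h1 h2] h3].
  change (Rabs (x' - x) < Rmin rho (eps / (3 * M))) in h1.
  change (Rabs (u' - u) < Rmin rho (eps / (3 * M))) in h2.
  change (Rabs (p' - p) < Rmin rho (eps / (3 * M))) in h3.
  change (Rabs (I x' u' p' - I x u p) < eps).
  assert (k1 := Rmin_l rho (eps / (3 * M))). assert (k2 := Rmin_r rho (eps / (3 * M))).
  assert (Z0 : forall t, Rabs (t - t) < rho) by (intros; rewrite Rminus_diag, Rabs_R0; lra).
  assert (S1 : Rabs (I x' u' p' - I x' u' p) <= M * Rabs (p' - p)).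
  { apply (mvt_bound (fun t => I x' u' t) (fun t => gc x' u' t) p rho); [apply Z0|lra|].
    intros s Hs. destruct (Inside x' u' s) as [Vs [_ [_ B]]]; try lra.
    split; auto. apply (Hg _ _ _ Vs). }
  assert (S2 : Rabs (I x' u' p - I x' u p) <= M * Rabs (u' - u)).
  { apply (mvt_bound (fun t => I x' t p) (fun t => gb x' t p) u rho); [apply Z0|lra|].
    intros s Hs. destruct (Inside x' s p) as [Vs [_ [B _]]]; try lra. apply Z0.
    split; auto. apply (Hg _ _ _ Vs). }
  assert (S3 : Rabs (I x' u p - I x u p) <= M * Rabs (x' - x)).
  { apply (mvt_bound (fun t => I t u p) (fun t => ga t u p) x rho); [apply Z0|lra|].
    intros s Hs. destruct (Inside s u p) as [Vs [B _]]; try lra; try apply Z0.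
    split; auto. apply (Hg _ _ _ Vs). }
  replace (I x' u' p' - I x u p) with ((I x' u' p' - I x' u' p) + (I x' u' p - I x' u p) + (I x' u p - I x u p)) by ring.
  eapply Rle_lt_trans. eapply Rle_trans. apply Rabs_triang.
  apply Rplus_le_compat_r. apply Rabs_triang.
  assert (T : M * Rabs (p' - p) + M * Rabs (u' - u) + M * Rabs (x' - x) < eps).
  { assert (E3 : M * (eps / (3 * M)) = eps / 3) by (field; lra).
    assert (Q1 : M * Rabs (p' - p) < eps / 3) by (rewrite <- E3; apply Rmult_lt_compat_l; lra).
    assert (Q2 : M * Rabs (u' - u) < eps / 3) by (rewrite <- E3; apply Rmult_lt_compat_l; lra).
    assert (Q3 : M * Rabs (x' - x) < eps / 3) by (rewrite <- E3; apply Rmult_lt_compat_l; lra).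
    lra. }
  lra.
Qed.

Lemma grad_Cinf (V : pt -> Prop) (I ga gb gc : fn) : open V ->
  grad_system V I ga gb gc -> Cinf V ga -> Cinf V gb -> Cinf V gc -> Cinf V I.
Proof.
  intros HV Hg Ha Hb Hc.
  assert (Hbase : base V I).
  { intros x u p Hq. split.
    - intros d. destruct (Hg x u p Hq) as [E1 [E2 E3]]. destruct d; simpl; eexists; eauto.
    - apply (C1_cont V I ga gb gc); auto. intros [[a b] c] Hq'.
      split; [apply (Ha nil a b c Hq')|split; [apply (Hb nil a b c Hq')|apply (Hc nil a b c Hq')]]. }
  apply Cinf_CN. intros n. destruct n as [|m]. split; auto. split; auto.
  intros d. rewrite Cinf_CN in Ha, Hb, Hc.
  destruct d.
  - apply CN_ext with ga; auto. intros x u p Hq. symmetry. apply is_derive_unique. apply (Hg x u p Hq).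
  - apply CN_ext with gb; auto. intros x u p Hq. symmetry. apply is_derive_unique. apply (Hg x u p Hq).
  - apply CN_ext with gc; auto. intros x u p Hq. symmetry. apply is_derive_unique. apply (Hg x u p Hq).
Qed.


Definition fsub (F G : fn) : fn := fun x u p => F x u p - G x u p.
Definition fopp (F : fn) : fn := fun x u p => - F x u p.
Definition fdiv (F G : fn) : fn := fun x u p => F x u p / G x u p.

Lemma CN_sub n U F G : open U -> CN n U F -> CN n U G -> CN n U (fsub F G).
Proof.
  intros HU HF HG. apply CN_ext with (fplus F (fmult (cst (-1)) G)); auto.
  intros; unfold fplus, fmult, fsub, cst; ring.
  apply CN_plus; auto. apply CN_mult; auto. apply CN_cst.
Qed.
Lemma CN_opp n U F : open U -> CN n U F -> CN n U (fopp F).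
Proof.
  intros HU HF. apply CN_ext with (fmult (cst (-1)) F); auto.
  intros; unfold fmult, fopp, cst; ring. apply CN_mult; auto. apply CN_cst.
Qed.
Lemma CN_div n U F G : open U -> (forall x u p, U (x,u,p) -> G x u p <> 0) ->
  CN n U F -> CN n U G -> CN n U (fdiv F G).
Proof.
  intros HU Hnz HF HG. apply CN_ext with (fmult F (finv G)); auto.
  apply CN_mult; auto. apply CN_inv; auto.
Qed.

Lemma ex_pd_sub d F G x u p : ex_pd d F x u p -> ex_pd d G x u p -> ex_pd d (fsub F G) x u p.
Proof. destruct d; simpl; unfold fsub; intros H1 H2; exact (ex_derive_minus _ _ _ H1 H2). Qed.
Lemma ex_pd_opp d F x u p : ex_pd d F x u p -> ex_pd d (fopp F) x u p.
Proof. destruct d; simpl; unfold fopp; intros H1; exact (ex_derive_opp _ _ H1). Qed.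
Lemma ex_pd_div d F G x u p : ex_pd d F x u p -> ex_pd d G x u p -> G x u p <> 0 -> ex_pd d (fdiv F G) x u p.
Proof. destruct d; simpl; unfold fdiv; intros H1 H2 H3; exact (ex_derive_div _ _ _ H1 H2 H3). Qed.

Lemma pd_sub d F G x u p : ex_pd d F x u p -> ex_pd d G x u p ->
  pd d (fsub F G) x u p = pd d F x u p - pd d G x u p.
Proof. destruct d; simpl; unfold fsub; intros H1 H2; exact (Derive_minus _ _ _ H1 H2). Qed.
Lemma pd_opp d F x u p : pd d (fopp F) x u p = - pd d F x u p.
Proof. destruct d; simpl; unfold fopp; apply Derive_opp. Qed.
Lemma pd_div d F G x u p : ex_pd d F x u p -> ex_pd d G x u p -> G x u p <> 0 ->
  pd d (fdiv F G) x u p = (pd d F x u p * G x u p - F x u p * pd d G x u p) / (G x u p ^ 2).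
Proof. destruct d; simpl; unfold fdiv; intros H1 H2 H3; exact (Derive_div _ _ _ H1 H2 H3). Qed.

Lemma div_solve a b c : a * c = b -> c <> 0 -> a = b / c.
Proof. intros H Hc. rewrite <- H. field. auto. Qed.


Lemma Cinf_pt U F x u p : Cinf U F -> U (x,u,p) -> forall d, ex_pd d F x u p.
Proof. intros H Hq. exact (proj1 (H nil x u p Hq)). Qed.

Lemma exist_sys (U : pt -> Prop) (phi L M f g : fn) x0 u0 p0 r :
  open U -> (forall q, box x0 u0 p0 r q -> U q) ->
  Cinf U phi -> Cinf U L -> Cinf U M -> Cinf U f -> Cinf U g ->
  (forall x u p, U (x,u,p) -> L x u p - M x u p <> 0 /\ f x u p <> 0 /\ g x u p <> 0) ->
  (forall x u p, U (x,u,p) ->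
    pd Defs.Du phi x u p + L x u p * pd Defs.Dp phi x u p
      - (pd Defs.Dx L x u p + p * pd Defs.Du L x u p + phi x u p * pd Defs.Dp L x u p) = L x u p * L x u p /\
    pd Defs.Du phi x u p + M x u p * pd Defs.Dp phi x u p
      - (pd Defs.Dx M x u p + p * pd Defs.Du M x u p + phi x u p * pd Defs.Dp M x u p) = M x u p * M x u p /\
    (pd Defs.Du f x u p + L x u p * pd Defs.Dp f x u p) * (L x u p - M x u p) =
      f x u p * ((pd Defs.Du M x u p + L x u p * pd Defs.Dp M x u p)
                 - (pd Defs.Du L x u p + M x u p * pd Defs.Dp L x u p)) /\
    (pd Defs.Dx g x u p + p * pd Defs.Du g x u p + phi x u p * pd Defs.Dp g x u p) * f x u p =
      (M x u p * f x u p - (pd Defs.Dx f x u p + p * pd Defs.Du f x u p + phi x u p * pd Defs.Dp f x u p)) * g x u p /\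
    pd Defs.Du g x u p + L x u p * pd Defs.Dp g x u p = 0) ->
  exists I, Cinf (box x0 u0 p0 r) I /\
    grad_system (box x0 u0 p0 r) I
      (fun x u p => (L x u p * p - phi x u p) / (f x u p * g x u p * (M x u p - L x u p)))
      (fun x u p => - L x u p / (f x u p * g x u p * (M x u p - L x u p)))
      (fun x u p => 1 / (f x u p * g x u p * (M x u p - L x u p))).
Proof.
  intros HU HBU Hphi HL HM Hf Hg Hnz Heq.
  set (B := box x0 u0 p0 r).
  assert (HB : open B) by apply box_open.
  assert (sB : subset3 B U) by exact HBU.
  set (H := fmult (fmult f g) (fsub M L)).
  set (A := fdiv (fsub (fmult L projp) phi) H).
  set (Bc := fdiv (fopp L) H).
  set (Cc := fdiv (cst 1) H).
  change (exists I, Cinf B I /\ grad_system B I A Bc Cc).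
  assert (HnzB : forall x u p, B (x,u,p) -> H x u p <> 0).
  { intros x u p Hq. destruct (Hnz x u p (sB _ Hq)) as [h1 [h2 h3]].
    unfold H, fmult, fsub. apply Rmult_integral_contrapositive_currified.
    apply Rmult_integral_contrapositive_currified; auto. intros E; apply h1; lra. }
  apply (Cinf_mono U B) in Hphi, HL, HM, Hf, Hg; auto.
  rewrite Cinf_CN in Hphi, HL, HM, Hf, Hg.
  assert (CH : forall n, CN n B H).
  { intros n. apply CN_mult; auto. apply CN_mult; auto. apply CN_sub; auto. }
  assert (CA : forall n, CN n B A).
  { intros n. apply CN_div; auto. apply CN_sub; auto. apply CN_mult; auto. apply CN_projp. }
  assert (CB : forall n, CN n B Bc).
  { intros n. apply CN_div; auto. apply CN_opp; auto. }
  assert (CC : forall n, CN n B Cc).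
  { intros n. apply CN_div; auto. apply CN_cst. }
  assert (Gs : grad_system B (pI x0 u0 p0 A Bc Cc) A Bc Cc).
  { apply poincare; auto.
    intros x u p Hq.
    rewrite <- Cinf_CN in Hphi, HL, HM, Hf, Hg.
    assert (eL := Cinf_pt _ _ _ _ _ HL Hq). assert (eM := Cinf_pt _ _ _ _ _ HM Hq).
    assert (ef := Cinf_pt _ _ _ _ _ Hf Hq). assert (eg := Cinf_pt _ _ _ _ _ Hg Hq).
    assert (eF := Cinf_pt _ _ _ _ _ Hphi Hq).
    assert (nH := HnzB _ _ _ Hq).
    destruct (Hnz x u p (sB _ Hq)) as [n1 [n2 n3]].
    destruct (Heq x u p (sB _ Hq)) as [SL [SM [Rf [Gg G2]]]].
    assert (eH : forall d, ex_pd d H x u p).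
    { intros d. apply ex_pd_mult. apply ex_pd_mult; auto. apply ex_pd_sub; auto. }
    assert (eN : forall d, ex_pd d (fsub (fmult L projp) phi) x u p).
    { intros d. apply ex_pd_sub; auto. apply ex_pd_mult; auto. apply ex_pd_projp. }
    unfold A, Bc, Cc.
    rewrite !pd_div; auto; try (apply ex_pd_opp; auto); try apply ex_pd_cst.
    rewrite !pd_sub; auto; try (apply ex_pd_mult; auto; apply ex_pd_projp).
    rewrite !pd_opp, !pd_cst.
    unfold H. rewrite !pd_mult; auto; try (apply ex_pd_mult; auto); try (apply ex_pd_sub; auto); try apply ex_pd_projp.
    rewrite !pd_sub; auto.
    rewrite !pd_projp.
    unfold fmult, fsub, fopp, cst, projp. cbv beta iota.
    set (Lv := L x u p) in *. set (Mv := M x u p) in *. set (fv := f x u p) in *.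
    set (gv := g x u p) in *. set (Fv := phi x u p) in *.
    set (Lx := pd Defs.Dx L x u p) in *. set (Lu := pd Defs.Du L x u p) in *. set (Lp := pd Defs.Dp L x u p) in *.
    set (Mx := pd Defs.Dx M x u p) in *. set (Mu := pd Defs.Du M x u p) in *. set (Mp := pd Defs.Dp M x u p) in *.
    set (fx := pd Defs.Dx f x u p) in *. set (fu := pd Defs.Du f x u p) in *. set (fp := pd Defs.Dp f x u p) in *.
    set (gx := pd Defs.Dx g x u p) in *. set (gu := pd Defs.Du g x u p) in *. set (gp := pd Defs.Dp g x u p) in *.
    set (Fx := pd Defs.Dx phi x u p) in *. set (Fu := pd Defs.Du phi x u p) in *. set (Fp := pd Defs.Dp phi x u p) in *.
    clearbody Lv Mv fv gv Fv Lx Lu Lp Mx Mu Mp fx fu fp gx gu gp Fx Fu Fp.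
    assert (nLM : Mv - Lv <> 0) by (intros E; apply n1; lra).
    assert (Egu : gu = - (Lv * gp)) by lra.
    assert (Efu' := div_solve _ _ _ Rf n1).
    assert (Efu : fu = fv * (Mu + Lv * Mp - (Lu + Mv * Lp)) / (Lv - Mv) - Lv * fp) by lra.
    assert (Egx' := div_solve _ _ _ Gg n2).
    assert (Egx : gx = (Mv * fv - (fx + p * fu + Fv * fp)) * gv / fv - p * gu - Fv * gp) by lra.
    assert (ELx : Lx = Fu + Lv * Fp - p * Lu - Fv * Lp - Lv * Lv) by lra.
    assert (EMx : Mx = Fu + Mv * Fp - p * Mu - Fv * Mp - Mv * Mv) by lra.
    clear SL SM Rf Gg G2 Efu' Egx'.
    subst gx. subst gu. subst fu. subst Lx. subst Mx.
    split; [|split]; field; repeat split; auto. }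
  exists (pI x0 u0 p0 A Bc Cc). split; auto.
  apply (grad_Cinf B _ A Bc Cc); auto; apply Cinf_CN; auto.
Qed.


Lemma prol_canon phi lam : prol phi lam (cst 0) (cst 1) = VF (cst 0) (cst 1) lam.
Proof.
  unfold prol. f_equal.
  apply functional_extensionality; intros x; apply functional_extensionality; intros u;
  apply functional_extensionality; intros p.
  unfold Alam, vapp. rewrite !pd_cst. unfold cst. ring.
Qed.

Lemma gen_sym_eq U phi lam : gen_sym U phi (cst 0) (cst 1) lam ->
  Cinf U lam /\ forall x u p, U (x,u,p) ->
    pd Defs.Du phi x u p + lam x u p * pd Defs.Dp phi x u p
      - (pd Defs.Dx lam x u p + p * pd Defs.Du lam x u p + phi x u p * pd Defs.Dp lam x u p) = lam x u p * lam x u p.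
Proof.
  intros [_ [_ [Hl Hb]]]. split; auto. intros x u p Hq.
  cbv zeta in Hb. rewrite prol_canon in Hb.
  destruct (Hb x u p Hq) as [_ [_ H3]]. clear Hb.
  unfold bracket, Alam, vapp, Afield in H3. cbn [vx vu vp] in H3.
  rewrite !pd_cst in H3. unfold cst in H3. lra.
Qed.

Lemma frac_cross a f b c : a / f = b / c -> f <> 0 -> c <> 0 -> a * c = f * b.
Proof.
  intros H hf hc. replace a with (a / f * f) by (field; auto). rewrite H. field. auto.
Qed.

Lemma frac_g a m b f g : a = (m - b / f) * g -> f <> 0 -> a * f = (m * f - b) * g.
Proof. intros H hf. rewrite H. field. auto. Qed.

Theorem theorem3 (U : pt -> Prop) (phi lam1 lam2 f1 f2 g1 g2 : fn) :
  open U ->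
  Cinf U phi ->
  (* (∂_u, λ1), (∂_u, λ2): generalized C^∞-symmetries, in canonical form *)
  gen_sym U phi (cst 0) (cst 1) lam1 ->
  gen_sym U phi (cst 0) (cst 1) lam2 ->
  (* non-equivalent *)
  ~ A_equiv U phi (cst 0) (cst 1) lam1 (cst 0) (cst 1) lam2 ->
  Cinf U f1 -> Cinf U f2 -> Cinf U g1 -> Cinf U g2 ->
  (forall x u p, U (x, u, p) ->
     lam1 x u p - lam2 x u p <> 0 /\ f1 x u p <> 0 /\ f2 x u p <> 0 /\
     g1 x u p <> 0 /\ g2 x u p <> 0) ->
  let X1 := VF (cst 0) (cst 1) lam1 in
  let X2 := VF (cst 0) (cst 1) lam2 in
  let rho : fn := fun x u p =>
    (vapp X1 lam2 x u p - vapp X2 lam1 x u p) / (lam1 x u p - lam2 x u p) in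
  let Y1 := VF (cst 0) f1 (fun x u p => f1 x u p * lam1 x u p) in
  let Y2 := VF (cst 0) f2 (fun x u p => f2 x u p * lam2 x u p) in
  let rho1 : fn := fun x u p => lam1 x u p - vapp (Afield phi) f1 x u p / f1 x u p in
  let rho2 : fn := fun x u p => lam2 x u p - vapp (Afield phi) f2 x u p / f2 x u p in
  (forall x u p, U (x, u, p) ->
     vapp X1 f2 x u p / f2 x u p = rho x u p /\
     vapp X2 f1 x u p / f1 x u p = rho x u p /\
     vapp (Afield phi) g1 x u p = rho1 x u p * g1 x u p /\
     vapp Y2 g1 x u p = 0 /\
     vapp (Afield phi) g2 x u p = rho2 x u p * g2 x u p /\
     vapp Y1 g2 x u p = 0) ->
  let h1 : fn := fun x u p => f2 x u p * g2 x u p * (lam2 x u p - lam1 x u p) in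
  let h2 : fn := fun x u p => f1 x u p * g1 x u p * (lam1 x u p - lam2 x u p) in
  let sys1 V I := grad_system V I
      (fun x u p => (lam1 x u p * p - phi x u p) / h1 x u p)
      (fun x u p => - lam1 x u p / h1 x u p)
      (fun x u p => 1 / h1 x u p) in
  let sys2 V I := grad_system V I
      (fun x u p => (lam2 x u p * p - phi x u p) / h2 x u p)
      (fun x u p => - lam2 x u p / h2 x u p)
      (fun x u p => 1 / h2 x u p) in
  (* the systems are solvable (by quadratures), locally around every point *)
  (forall q, U q -> exists V : pt -> Prop, open V /\ V q /\ subset3 V U /\
     exists I1 I2 : fn, Cinf V I1 /\ Cinf V I2 /\ sys1 V I1 /\ sys2 V I2) /\
  (* any solutions are functionally independent first integrals associated
     to (∂_u, λ1) and (∂_u, λ2) respectively *)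
  (forall (V : pt -> Prop) (I1 I2 : fn), open V -> subset3 V U ->
     Cinf V I1 -> Cinf V I2 -> sys1 V I1 -> sys2 V I2 ->
     first_integral V phi (cst 0) (cst 1) lam1 I1 /\
     first_integral V phi (cst 0) (cst 1) lam2 I2 /\
     func_indep V I1 I2).
Proof.
  intros HU Hphi GS1 GS2 _ Hf1 Hf2 Hg1 Hg2 Hnz X1 X2 rho Y1 Y2 rho1 rho2 Hrel h1 h2 sys1 sys2.
  destruct (gen_sym_eq _ _ _ GS1) as [HL1 S1]. destruct (gen_sym_eq _ _ _ GS2) as [HL2 S2].
  subst X1 X2 rho Y1 Y2 rho1 rho2 h1 h2 sys1 sys2.
  split.
  - intros [[x0 u0] p0] Hq.
    destruct (open_box U x0 u0 p0 HU Hq) as [e He].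
    assert (sub : forall q, box x0 u0 p0 e q -> U q).
    { intros [[a b] c] [k1 [k2 k3]]. apply He; auto. }
    exists (box x0 u0 p0 e). split; [apply box_open|]. split.
    { split; [|split]; simpl; rewrite Rminus_diag, Rabs_R0; apply cond_pos. }
    split; [exact sub|].
    destruct (exist_sys U phi lam1 lam2 f2 g2 x0 u0 p0 e HU sub Hphi HL1 HL2 Hf2 Hg2) as [I1 [C1 G1]].
    { intros x u p Hx. destruct (Hnz x u p Hx) as [n1 [n2 [n3 [n4 n5]]]]. auto. }
    { intros x u p Hx. destruct (Hnz x u p Hx) as [n1 [n2 [n3 [n4 n5]]]].
      destruct (Hrel x u p Hx) as [R1 [R2 [R3 [R4 [R5 R6]]]]].
      unfold vapp, Afield in R1, R2, R3, R4, R5, R6. cbn [vx vu vp] in R1, R2, R3, R4, R5, R6.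
      unfold cst in R1, R2, R3, R4, R5, R6.
      split; [apply S1; auto|]. split; [apply S2; auto|]. split.
      { apply frac_cross in R1; auto. lra. }
      split.
      { apply frac_g in R5; auto. lra. }
      assert (E : f1 x u p * (pd Defs.Du g2 x u p + lam1 x u p * pd Defs.Dp g2 x u p) = 0) by lra.
      apply Rmult_integral in E. destruct E; [contradiction|auto]. }
    destruct (exist_sys U phi lam2 lam1 f1 g1 x0 u0 p0 e HU sub Hphi HL2 HL1 Hf1 Hg1) as [I2 [C2 G2]].
    { intros x u p Hx. destruct (Hnz x u p Hx) as [n1 [n2 [n3 [n4 n5]]]].
      split; auto. intros E; apply n1; lra. }
    { intros x u p Hx. destruct (Hnz x u p Hx) as [n1 [n2 [n3 [n4 n5]]]].
      destruct (Hrel x u p Hx) as [R1 [R2 [R3 [R4 [R5 R6]]]]].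
      unfold vapp, Afield in R1, R2, R3, R4, R5, R6. cbn [vx vu vp] in R1, R2, R3, R4, R5, R6.
      unfold cst in R1, R2, R3, R4, R5, R6.
      split; [apply S2; auto|]. split; [apply S1; auto|]. split.
      { apply frac_cross in R2; auto. lra. }
      split.
      { apply frac_g in R3; auto. lra. }
      assert (E : f2 x u p * (pd Defs.Du g1 x u p + lam2 x u p * pd Defs.Dp g1 x u p) = 0) by lra.
      apply Rmult_integral in E. destruct E; [contradiction|auto]. }
    exists I1, I2. split; [exact C1|]. split; [exact C2|]. split; [exact G1|exact G2].
  - intros V I1 I2 HV sVU C1 C2 G1 G2.
    assert (D1 : forall x u p, V (x,u,p) ->
      pd Defs.Dx I1 x u p = (lam1 x u p * p - phi x u p) / (f2 x u p * g2 x u p * (lam2 x u p - lam1 x u p)) /\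
      pd Defs.Du I1 x u p = - lam1 x u p / (f2 x u p * g2 x u p * (lam2 x u p - lam1 x u p)) /\
      pd Defs.Dp I1 x u p = 1 / (f2 x u p * g2 x u p * (lam2 x u p - lam1 x u p))).
    { intros x u p Hq. destruct (G1 x u p Hq) as [k1 [k2 k3]].
      split; [|split]; apply is_derive_unique; assumption. }
    assert (D2 : forall x u p, V (x,u,p) ->
      pd Defs.Dx I2 x u p = (lam2 x u p * p - phi x u p) / (f1 x u p * g1 x u p * (lam1 x u p - lam2 x u p)) /\
      pd Defs.Du I2 x u p = - lam2 x u p / (f1 x u p * g1 x u p * (lam1 x u p - lam2 x u p)) /\
      pd Defs.Dp I2 x u p = 1 / (f1 x u p * g1 x u p * (lam1 x u p - lam2 x u p))).
    { intros x u p Hq. destruct (G2 x u p Hq) as [k1 [k2 k3]].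
      split; [|split]; apply is_derive_unique; assumption. }
    split; [|split].
    + split; [exact C1|]. intros x u p Hq. rewrite prol_canon.
      destruct (Hnz x u p (sVU _ Hq)) as [n1 [n2 [n3 [n4 n5]]]].
      unfold vapp, Afield, cst; cbn [vx vu vp].
      destruct (D1 x u p Hq) as [-> [-> ->]].
      assert (lam2 x u p - lam1 x u p <> 0) by (intros E; apply n1; lra).
      split; field; repeat split; auto.
    + split; [exact C2|]. intros x u p Hq. rewrite prol_canon.
      destruct (Hnz x u p (sVU _ Hq)) as [n1 [n2 [n3 [n4 n5]]]].
      unfold vapp, Afield, cst; cbn [vx vu vp].
      destruct (D2 x u p Hq) as [-> [-> ->]].
      split; field; repeat split; auto.
    + intros x u p Hq a b E1 E2 E3.
      destruct (Hnz x u p (sVU _ Hq)) as [n1 [n2 [n3 [n4 n5]]]].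
      destruct (D1 x u p Hq) as [P1 [P2 P3]]. destruct (D2 x u p Hq) as [Q1 [Q2 Q3]].
      rewrite P2, Q2 in E2. rewrite P3, Q3 in E3. clear E1.
      set (k1 := f2 x u p * g2 x u p * (lam2 x u p - lam1 x u p)) in *.
      set (k2 := f1 x u p * g1 x u p * (lam1 x u p - lam2 x u p)) in *.
      assert (nk1 : k1 <> 0).
      { unfold k1. apply Rmult_integral_contrapositive_currified.
        apply Rmult_integral_contrapositive_currified; auto. intros E; apply n1; lra. }
      assert (nk2 : k2 <> 0).
      { unfold k2. apply Rmult_integral_contrapositive_currified.
        apply Rmult_integral_contrapositive_currified; auto. auto. }
      assert (Ea : a / k1 + b / k2 = 0) by (rewrite <- E3; field; auto).
      assert (Eb : lam1 x u p * (a / k1) + lam2 x u p * (b / k2) = 0).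
      { replace (lam1 x u p * (a / k1) + lam2 x u p * (b / k2)) with
          (- (a * (- lam1 x u p / k1) + b * (- lam2 x u p / k2))) by (field; auto).
        rewrite E2. ring. }
      assert (Bq : b / k2 = - (a / k1)) by lra.
      rewrite Bq in Eb.
      assert (Z : a / k1 * (lam1 x u p - lam2 x u p) = 0).
      { replace (a / k1 * (lam1 x u p - lam2 x u p)) with
          (lam1 x u p * (a / k1) + lam2 x u p * - (a / k1)) by ring. exact Eb. }
      apply Rmult_integral in Z. destruct Z as [Z|Z]; [|contradiction].
      assert (Za : a = 0) by (replace a with (a / k1 * k1) by (field; auto); rewrite Z; ring).
      rewrite Za in Bq. assert (Zb : b / k2 = 0) by (rewrite Bq; unfold Rdiv; ring).
      split; auto. replace b with (b / k2 * k2) by (field; auto). rewrite Zb. ring.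
Qed.
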